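(* Let $\eta_{0},\eta_{1},\eta_{2}>0$ and $\beta(s)=\eta_{0}\exp(-\eta_{1}s^{\eta_{2}})$ for $s>0$, and fix $a>0$. Let $K(u)=u\beta(1/u)$ for $u>0$, $K(0)=0$, $K^{*}(v)=\sup_{u\ge0}\{uv-K(u)\}$, and $F_{a}(x)=\int_{x}^{a}\frac{\mathrm{d}v}{K^{*}(v)}$ for $x\in(0,a]$, with inverse $F_{a}^{-1}$. Then there exist $C>0$ and $0<v_{0}<1\wedge a$ such that for all $v\in(0,v_{0}]$, \[ K^{*}(v)\ge Cv\Big(\log\frac{1}{v}\Big)^{-1/\eta_{2}}, \] and there exists $C'>0$ such that for all $n\in\mathbb{N}$, \[ F_{a}^{-1}(n)\le C'\exp\Big(-\Big(C\frac{1+\eta_{2}}{\eta_{2}}n\Big)^{\eta_{2}/(1+\eta_{2})}\Big). \] *)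

(* Defs.v *)
From Stdlib Require Import Reals Lra ClassicalEpsilon.
From Coquelicot Require Import Coquelicot.
Open Scope R_scope.

(* real power x^y for x >= 0, with the convention 0^y = 0 (y > 0) *)
Definition rpow (x y : R) : R :=
  if Req_EM_T x 0 then 0 else Rpower x y.

Definition beta (eta0 eta1 eta2 s : R) : R :=
  eta0 * exp (- eta1 * rpow s eta2).

Definition Kfun (eta0 eta1 eta2 u : R) : R :=
  if Rlt_dec 0 u then u * beta eta0 eta1 eta2 (/ u) else 0.

Definition Kstar (eta0 eta1 eta2 v : R) : Rbar :=
  Lub_Rbar (fun y => exists u, 0 <= u /\ y = u * v - Kfun eta0 eta1 eta2 u).

Definition invKstar (eta0 eta1 eta2 v : R) : R :=
  match Kstar eta0 eta1 eta2 v with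
  | Finite r => / r
  | _ => 0
  end.

Definition Fa (eta0 eta1 eta2 a x : R) : R :=
  RInt (invKstar eta0 eta1 eta2) x a.

Definition Fa_inv (eta0 eta1 eta2 a t : R) : R :=
  epsilon (inhabits 0) (fun x => 0 < x <= a /\ Fa eta0 eta1 eta2 a x = t).

(* Main.v *)
Require Import Defs.
From Stdlib Require Import Reals Lra Lia Classical ClassicalEpsilon.
From Coquelicot Require Import Coquelicot.
Open Scope R_scope.
Lemma kstar_lb e0 e1 e2 v w : 0 < e0 -> 0 < e1 -> 0 < e2 ->
  0 < v < 1 -> e0 * v <= /2 -> v <= w ->
  Rbar_le (Finite (/2 * Rpower (e1/2) (/e2) * v * Rpower (ln (/v)) (-/e2)))
          (Kstar e0 e1 e2 w).
Proof.
intros h0 h1 h2 hv hv2 hvw.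
set (L := ln (/v)).
assert (hL : 0 < L). { unfold L. rewrite ln_Rinv by lra. assert (ln v < 0) by (rewrite <- ln_1; apply ln_increasing; lra). lra. }
set (u := exp (/e2 * ln (e1 / (2 * L)))).
assert (hu : 0 < u) by apply exp_pos.
unfold Kstar.
destruct (Lub_Rbar_correct (fun y => exists u, 0 <= u /\ y = u * w - Kfun e0 e1 e2 u)) as [Hub _].
eapply Rbar_le_trans; [| apply Hub; exists u; split; [lra | reflexivity]].
simpl.
unfold Kfun. destruct (Rlt_dec 0 u) as [_|]; [|lra].
unfold beta, rpow. destruct (Req_EM_T (/u) 0) as [e|_].
{ exfalso. apply Rinv_neq_0_compat in e; lra. }
assert (E1 : Rpower (/u) e2 = 2 * L / e1).
{ unfold Rpower, u. rewrite ln_Rinv by apply exp_pos. rewrite ln_exp.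
  replace (e2 * - (/ e2 * ln (e1 / (2 * L)))) with (- ln (e1 / (2*L))) by (field; lra).
  rewrite exp_Ropp, exp_ln by (apply Rdiv_lt_0_compat; lra). field; lra. }
rewrite E1.
assert (E2 : exp (- e1 * (2 * L / e1)) = v * v).
{ replace (- e1 * (2 * L / e1)) with (ln v + ln v).
  - rewrite exp_plus, exp_ln by lra. reflexivity.
  - unfold L. rewrite ln_Rinv by lra. field; lra. }
rewrite E2.
assert (E3 : u = Rpower (e1/2) (/e2) * Rpower L (-/e2)).
{ unfold u, Rpower. rewrite <- exp_plus. f_equal.
  rewrite (ln_div e1 (2*L)) by lra. rewrite ln_mult by lra.
  rewrite (ln_div e1 2) by lra. unfold Rdiv. ring. }
assert (u * w - u * (e0 * (v * v)) >= u * v / 2).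
{ assert (u * w >= u * v) by (apply Rle_ge, Rmult_le_compat_l; lra).
  assert (u * (e0 * (v*v)) <= u * v / 2).
  { replace (u * (e0 * (v*v))) with ((u * v) * (e0 * v)) by ring.
    assert (0 < u * v) by (apply Rmult_lt_0_compat; lra).
    replace (u * v / 2) with ((u*v) * /2) by field.
    apply Rmult_le_compat_l; lra. }
  lra. }
rewrite E3 in H. fold L. 
replace (/ 2 * Rpower (e1 / 2) (/ e2) * v * Rpower L (- / e2)) with
 (Rpower (e1 / 2) (/ e2) * Rpower L (- / e2) * v / 2) by field.
rewrite E3; lra.
Qed.
Lemma invK_bound e0 e1 e2 v b : 0 < b -> Rbar_le (Finite b) (Kstar e0 e1 e2 v) ->
  0 <= invKstar e0 e1 e2 v <= / b.
Proof.
intros hb H. unfold invKstar. destruct (Kstar e0 e1 e2 v) as [r| |]; simpl in H.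
- split. left; apply Rinv_0_lt_compat; lra. apply Rinv_le_contravar; lra.
- split; [lra| left; apply Rinv_0_lt_compat; lra].
- contradiction.
Qed.

Lemma antider e2 c x y : 0 < e2 -> 0 < c -> 0 < x <= y -> y < 1 ->
  is_RInt (fun v => exp (/e2 * ln (ln (/v))) / (c * v)) x y
    ((- / (c * (1 + /e2)) * exp ((1 + /e2) * ln (ln (/y))))
     - (- / (c * (1 + /e2)) * exp ((1 + /e2) * ln (ln (/x))))).
Proof.
intros h2 hc hx hy.
assert (Hln : forall t, 0 < t < 1 -> 0 < ln (/t)).
{ intros t ht. rewrite ln_Rinv by lra. assert (ln t < 0) by (rewrite <- ln_1; apply ln_increasing; lra). lra. }
apply (is_RInt_derive (fun v => - / (c * (1 + /e2)) * exp ((1 + /e2) * ln (ln (/v))))).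
- intros t ht. rewrite Rmin_left in ht by lra. rewrite Rmax_right in ht by lra.
  assert (hl := Hln t ltac:(lra)).
  auto_derive.
  + repeat split; try lra. apply Rinv_0_lt_compat; lra.
  + replace ((1 + / e2) * ln (ln (/ t))) with (/ e2 * ln (ln (/ t)) + ln (ln (/t))) by ring.
    rewrite exp_plus, (exp_ln (ln (/t))) by lra.
    field. repeat split; try lra.
- intros t ht. rewrite Rmin_left in ht by lra. rewrite Rmax_right in ht by lra.
  assert (hl := Hln t ltac:(lra)).
  apply (@ex_derive_continuous R_AbsRing R_NormedModule). auto_derive. repeat split; try lra; try (apply Rinv_0_lt_compat; lra). apply Rgt_not_eq, Rmult_lt_0_compat; lra.
Qed.
Definition ind (g : R -> R) (y t : R) : R := if Rle_dec y (g t) then 1 else 0.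

Lemma ind_int g y c d : (forall s t, s <= t -> g t <= g s) -> c <= d ->
  ex_RInt (ind g y) c d.
Proof.
intros Hg Hcd.
destruct (classic (exists t, c <= t <= d /\ y <= g t)) as [Hex|Hno].
- destruct (completeness (fun t => c <= t <= d /\ y <= g t)) as [s [Hs1 Hs2]].
  { exists d. intros t Ht. lra. }
  { exact Hex. }
  destruct Hex as [t0 Ht0].
  assert (hcs : c <= s) by (apply Rle_trans with t0; [lra| apply Hs1; auto]).
  assert (hsd : s <= d) by (apply Hs2; intros t Ht; lra).
  apply ex_RInt_Chasles with s.
  + apply ex_RInt_ext with (fun _ => 1). 2: apply ex_RInt_const.
    intros t Ht. rewrite Rmin_left in Ht by lra. rewrite Rmax_right in Ht by lra.
    unfold ind. destruct (Rle_dec y (g t)) as [_|hn]; [reflexivity|].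
    exfalso. assert (s <= t). { apply Hs2. intros t' Ht'. destruct (Rle_dec t' t) as [|hlt]; [auto|].
      exfalso. apply hn. apply Rle_trans with (g t'). tauto. apply Hg. lra. }
    lra.
  + apply ex_RInt_ext with (fun _ => 0). 2: apply ex_RInt_const.
    intros t Ht. rewrite Rmin_left in Ht by lra. rewrite Rmax_right in Ht by lra.
    unfold ind. destruct (Rle_dec y (g t)) as [hy|_]; [|reflexivity].
    exfalso. assert (t <= s) by (apply Hs1; split; [lra|auto]). lra.
- apply ex_RInt_ext with (fun _ => 0). 2: apply ex_RInt_const.
  intros t Ht. rewrite Rmin_left in Ht by lra. rewrite Rmax_right in Ht by lra.
  unfold ind. destruct (Rle_dec y (g t)) as [hy|_]; [|reflexivity].
  exfalso. apply Hno. exists t. split; [lra|auto].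
Qed.

Fixpoint cnt (g : R -> R) (m dl : R) (k : nat) (t : R) : R :=
  match k with
  | O => 0
  | S k' => cnt g m dl k' t + ind g (m + INR (S k') * dl) t
  end.

Lemma cnt_int g m dl k c d : (forall s t, s <= t -> g t <= g s) -> c <= d ->
  ex_RInt (cnt g m dl k) c d.
Proof.
intros Hg Hcd. induction k as [|k IH]; simpl.
- apply ex_RInt_const.
- apply (ex_RInt_plus (cnt g m dl k) (ind g (m + INR (S k) * dl))). exact IH.
  apply ind_int; auto.
Qed.

Lemma cnt_inv g m dl t : 0 <= dl -> m <= g t -> forall k, exists j : nat,
  (j <= k)%nat /\ cnt g m dl k t = INR j /\ m + INR j * dl <= g t /\
  (j = k \/ g t < m + (INR j + 1) * dl).
Proof.
intros hdl hm. induction k as [|k [j [Hjk [Hc [IH1 IH2]]]]].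
- exists O; simpl; split; [lia|split;[reflexivity|split;[lra|left;reflexivity]]].
- change (cnt g m dl (S k) t) with (cnt g m dl k t + ind g (m + INR (S k) * dl) t).
  unfold ind. destruct (Rle_dec (m + INR (S k) * dl) (g t)) as [h|h].
  + assert (E : j = k).
    { destruct (Nat.eq_dec j k) as [|hne]; auto.
      destruct IH2 as [|IH2]; auto. exfalso.
      assert (j < k)%nat by lia.
      assert (INR j + 1 <= INR k) by (rewrite <- S_INR; apply le_INR; lia).
      assert ((INR j + 1) * dl <= INR k * dl) by (apply Rmult_le_compat_r; lra).
      assert (INR k * dl <= INR (S k) * dl) by (apply Rmult_le_compat_r; [lra|apply le_INR; lia]).
      lra. }
    subst j. exists (S k). rewrite Hc. rewrite !S_INR in *. split; [lia|split;[reflexivity|split;[lra|left;reflexivity]]].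
  + exists j. rewrite Rplus_0_r. split; [lia|split;[exact Hc|split;[lra|]]].
    destruct IH2 as [E|E]; [|right; lra].
    right. subst j. rewrite S_INR in h. lra.
Qed.

Lemma mono_int_le g m M c d : (forall s t, s <= t -> g t <= g s) ->
  (forall t, m <= g t <= M) -> c <= d -> ex_RInt g c d.
Proof.
intros Hg Hb Hcd.
assert (hmM : m <= M) by (destruct (Hb 0); lra).
set (dl := fun N : nat => (M - m) / INR (S N)).
assert (hdl : forall N, 0 <= dl N).
{ intros N. unfold dl. apply Rdiv_le_0_compat; [lra| apply lt_0_INR; lia]. }
set (f := fun (N : nat) (t : R) => m + dl N * cnt g m (dl N) (S N) t).
assert (Hf : forall N, is_RInt (f N) c d (RInt (f N) c d)).
{ intros N. apply (RInt_correct (V:=R_CompleteNormedModule)).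
  apply (ex_RInt_ext (fun t => plus m (scal (dl N) (cnt g m (dl N) (S N) t)))).
  { intros; reflexivity. }
  apply (ex_RInt_plus (fun _ => m) (fun t => scal (dl N) (cnt g m (dl N) (S N) t))). apply ex_RInt_const. apply (ex_RInt_scal (cnt g m (dl N) (S N))). apply cnt_int; auto. }
destruct (filterlim_RInt f c d eventually eventually_filter g (fun N => RInt (f N) c d) Hf) as [If [_ HI]].
2: exists If; exact HI.
intros P [eps HP].
destruct (INR_unbounded ((M - m) / eps)) as [N0 HN0].
exists N0. intros N HN. apply HP. intros t.
destruct (cnt_inv g m (dl N) t (hdl N) (proj1 (Hb t)) (S N)) as [j [Hj [Hc [H1 H2]]]].
assert (heps : 0 < eps) by (destruct eps; simpl; auto).
assert (h1 : INR N0 <= INR (S N)) by (apply le_INR; lia).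
assert (hSN : 0 < INR (S N)) by (apply lt_0_INR; lia).
assert (h2 : M - m < eps * INR (S N)).
{ assert (E: M - m = (M-m)/eps * eps) by (field; lra). rewrite E.
  assert ((M-m)/eps*eps < INR N0 * eps) by (apply Rmult_lt_compat_r; lra). nra. }
assert (hdlN : dl N < eps).
{ apply (Rmult_lt_reg_r (INR (S N))); auto. unfold dl, Rdiv.
  rewrite Rmult_assoc, Rinv_l, Rmult_1_r by lra. lra. }
change (Rabs (f N t - g t) < eps). unfold f. rewrite Hc.
destruct (Hb t) as [hb1 hb2].
destruct H2 as [E|E].
- subst j. assert (E2 : dl N * INR (S N) = M - m) by (unfold dl; field; lra).
  rewrite E2 in *. rewrite Rmult_comm in H1. rewrite E2 in H1.
  rewrite Rabs_left1; lra.
- rewrite Rabs_left1; [|nra]. nra.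
Qed.

Lemma mono_int g m M c d : (forall s t, s <= t -> g t <= g s) ->
  (forall t, m <= g t <= M) -> ex_RInt g c d.
Proof.
intros Hg Hb. destruct (Rle_dec c d).
- eapply mono_int_le; eauto.
- apply ex_RInt_swap. eapply mono_int_le; eauto. lra.
Qed.

Lemma RInt_lip g B y y0 : (forall t, Rabs (g t) <= B) -> (forall c d, ex_RInt g c d) ->
  Rabs (RInt g y y0) <= B * Rabs (y - y0).
Proof.
intros Hb Hi. destruct (Rle_dec y y0).
- rewrite (Rabs_left1 (y - y0)) by lra.
  replace (B * - (y - y0)) with ((y0 - y) * B) by ring.
  apply abs_RInt_le_const; [lra|auto|intros; apply Hb].
- rewrite <- (opp_RInt_swap g y0 y) by auto.
  change (Rabs (- RInt g y0 y) <= B * Rabs (y - y0)). rewrite Rabs_Ropp.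
  rewrite (Rabs_right (y - y0)) by lra.
  replace (B * (y - y0)) with ((y - y0) * B) by ring.
  apply abs_RInt_le_const; [lra|auto|intros; apply Hb].
Qed.

Lemma RInt_cont g B a : (forall t, Rabs (g t) <= B) -> (forall c d, ex_RInt g c d) ->
  continuity (fun y => RInt g y a).
Proof.
intros Hb Hi y0. 
assert (hB : 0 <= B) by (specialize (Hb 0); pose proof (Rabs_pos (g 0)); lra).
unfold continuity_pt, continue_in, limit1_in, limit_in. intros eps heps.
exists (eps / (B + 1)). split. apply Rdiv_lt_0_compat; lra.
intros y [_ Hy]. simpl in *. unfold R_dist in *.
rewrite <- (RInt_Chasles g y y0 a) by auto.
change (Rabs (RInt g y y0 + RInt g y0 a - RInt g y0 a) < eps).
unfold Rminus; rewrite Rplus_assoc, Rplus_opp_r, Rplus_0_r.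
apply Rle_lt_trans with (B * Rabs (y - y0)). apply RInt_lip; auto.
apply Rle_lt_trans with ((B+1) * Rabs (y - y0)). pose proof (Rabs_pos (y - y0)); nra.
apply Rmult_lt_reg_r with (/(B+1)). apply Rinv_0_lt_compat; lra.
replace ((B + 1) * Rabs (y - y0) * / (B + 1)) with (Rabs (y - y0)) by (field; lra). exact Hy.
Qed.
Lemma Kfun_nonneg e0 e1 e2 u : 0 < e0 -> 0 <= Kfun e0 e1 e2 u.
Proof.
intros h0. unfold Kfun. destruct (Rlt_dec 0 u); [|lra].
unfold beta. pose proof (exp_pos (- e1 * rpow (/ u) e2)). 
apply Rmult_le_pos; [lra|]. apply Rmult_le_pos; lra.
Qed.

Lemma kstar_ub e0 e1 e2 v : 0 < e0 -> 0 < e1 -> 0 < e2 -> 0 < v <= e0 * exp (- e1) ->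
  Rbar_le (Kstar e0 e1 e2 v) (Finite v).
Proof.
intros h0 h1 h2 hv. unfold Kstar.
destruct (Lub_Rbar_correct (fun y => exists u, 0 <= u /\ y = u * v - Kfun e0 e1 e2 u)) as [_ Hl].
apply Hl. intros y [u [hu ->]]. simpl.
pose proof (Kfun_nonneg e0 e1 e2 u h0).
destruct (Rle_dec u 1).
- assert (u * v <= v) by nra. lra.
- unfold Kfun. destruct (Rlt_dec 0 u) as [_|]; [|lra].
  unfold beta, rpow. destruct (Req_EM_T (/u) 0) as [e|_].
  { exfalso. apply Rinv_neq_0_compat in e; lra. }
  assert (hr : Rpower (/u) e2 < 1).
  { unfold Rpower. rewrite <- exp_0. apply exp_increasing.
    assert (ln (/u) < 0). { rewrite <- ln_1. apply ln_increasing. apply Rinv_0_lt_compat; lra.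
      rewrite <- Rinv_1. apply Rinv_lt_contravar; lra. }
    nra. }
  assert (exp (- e1) <= exp (- e1 * Rpower (/ u) e2)).
  { apply Rlt_le, exp_increasing. nra. }
  assert (v <= e0 * exp (- e1 * Rpower (/ u) e2)) by nra.
  nra.
Qed.

Lemma kstar_mono e0 e1 e2 v w : 0 <= v <= w ->
  Rbar_le (Kstar e0 e1 e2 v) (Kstar e0 e1 e2 w).
Proof.
intros hvw. unfold Kstar.
destruct (Lub_Rbar_correct (fun y => exists u, 0 <= u /\ y = u * v - Kfun e0 e1 e2 u)) as [_ Hl].
destruct (Lub_Rbar_correct (fun y => exists u, 0 <= u /\ y = u * w - Kfun e0 e1 e2 u)) as [Hu _].
apply Hl. intros y [u [hu ->]].
eapply Rbar_le_trans; [| apply Hu; exists u; split; [exact hu| reflexivity]].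
simpl. nra.
Qed.

Lemma kstar_pos e0 e1 e2 v : 0 < e0 -> 0 < e1 -> 0 < e2 -> 0 < v ->
  exists b, 0 < b /\ Rbar_le (Finite b) (Kstar e0 e1 e2 v).
Proof.
intros h0 h1 h2 hv.
set (v' := Rmin v (Rmin (/2) (/(2*e0)))).
assert (hv1 : v' <= v) by apply Rmin_l.
assert (hv2 : v' <= /2) by (eapply Rle_trans; [apply Rmin_r| apply Rmin_l]).
assert (hv3 : v' <= /(2*e0)) by (eapply Rle_trans; [apply Rmin_r| apply Rmin_r]).
assert (hv4 : 0 < v').
{ unfold v'. repeat apply Rmin_pos; try lra. apply Rinv_0_lt_compat; lra. }
assert (hv5 : e0 * v' <= /2).
{ apply Rmult_le_compat_l with (r := e0) in hv3; [|lra].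
  replace (e0 * / (2 * e0)) with (/2) in hv3 by (field; lra). lra. }
eexists; split; [| apply (kstar_lb e0 e1 e2 v' v); auto; lra].
apply Rmult_lt_0_compat; [|apply exp_pos].
apply Rmult_lt_0_compat; [|lra].
apply Rmult_lt_0_compat; [lra|apply exp_pos].
Qed.

Lemma invK_nonneg e0 e1 e2 v : 0 < e0 -> 0 < e1 -> 0 < e2 -> 0 < v ->
  0 <= invKstar e0 e1 e2 v.
Proof.
intros. destruct (kstar_pos e0 e1 e2 v) as [b [hb Hb]]; auto.
apply (invK_bound e0 e1 e2 v b hb Hb).
Qed.

Lemma invK_anti e0 e1 e2 v w : 0 < e0 -> 0 < e1 -> 0 < e2 -> 0 < v <= w ->
  invKstar e0 e1 e2 w <= invKstar e0 e1 e2 v.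
Proof.
intros h0 h1 h2 hvw.
destruct (kstar_pos e0 e1 e2 v) as [b [hb Hb]]; auto. lra.
assert (Hm := kstar_mono e0 e1 e2 v w ltac:(lra)).
unfold invKstar. destruct (Kstar e0 e1 e2 v) as [r| |]; simpl in Hb; try contradiction;
destruct (Kstar e0 e1 e2 w) as [r'| |]; simpl in Hm; try contradiction.
- apply Rinv_le_contravar; lra.
- left; apply Rinv_0_lt_compat; lra.
- lra.
Qed.

Lemma invK_lower e0 e1 e2 v : 0 < e0 -> 0 < e1 -> 0 < e2 -> 0 < v <= e0 * exp (- e1) ->
  / v <= invKstar e0 e1 e2 v.
Proof.
intros h0 h1 h2 hv.
destruct (kstar_pos e0 e1 e2 v) as [b [hb Hb]]; auto. lra.
assert (Hu := kstar_ub e0 e1 e2 v h0 h1 h2 hv).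
unfold invKstar. destruct (Kstar e0 e1 e2 v) as [r| |]; simpl in Hb, Hu; try contradiction.
apply Rinv_le_contravar; lra.
Qed.

Definition clip e0 e1 e2 x a t := invKstar e0 e1 e2 (Rmax x (Rmin t a)).

Lemma clip_int e0 e1 e2 x a c d : 0 < e0 -> 0 < e1 -> 0 < e2 -> 0 < x <= a ->
  ex_RInt (clip e0 e1 e2 x a) c d.
Proof.
intros h0 h1 h2 hx.
apply (mono_int _ 0 (invKstar e0 e1 e2 x)).
- intros s t hst. unfold clip. apply invK_anti; auto. split.
  + apply Rlt_le_trans with x; [lra| apply Rmax_l].
  + apply Rle_max_compat_l. apply Rle_min_compat_r. exact hst.
- intros t. unfold clip. split.
  + apply invK_nonneg; auto. apply Rlt_le_trans with x; [lra| apply Rmax_l].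
  + apply invK_anti; auto. split; [lra| apply Rmax_l].
Qed.

Lemma clip_eq e0 e1 e2 x a t : x <= t <= a -> clip e0 e1 e2 x a t = invKstar e0 e1 e2 t.
Proof.
intros ht. unfold clip. f_equal. rewrite Rmin_left by lra. rewrite Rmax_right by lra. reflexivity.
Qed.

Lemma clip_abs e0 e1 e2 x a t : 0 < e0 -> 0 < e1 -> 0 < e2 -> 0 < x <= a ->
  Rabs (clip e0 e1 e2 x a t) <= invKstar e0 e1 e2 x.
Proof.
intros h0 h1 h2 hx. unfold clip.
assert (0 < Rmax x (Rmin t a)) by (apply Rlt_le_trans with x; [lra| apply Rmax_l]).
rewrite Rabs_right by (apply Rle_ge, invK_nonneg; auto).
apply invK_anti; auto. split; [lra| apply Rmax_l].
Qed.

Lemma invK_int e0 e1 e2 x a c d : 0 < e0 -> 0 < e1 -> 0 < e2 -> 0 < x <= a ->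
  x <= c <= a -> x <= d <= a -> ex_RInt (invKstar e0 e1 e2) c d.
Proof.
intros h0 h1 h2 hx hc hd.
apply (ex_RInt_ext (clip e0 e1 e2 x a)). 2: apply clip_int; auto.
intros t Ht. apply clip_eq.
split.
- apply Rle_trans with (Rmin c d). apply Rmin_glb; lra. lra.
- apply Rle_trans with (Rmax c d). lra. apply Rmax_lub; lra.
Qed.

Lemma Fa_exists e0 e1 e2 a n : 0 < e0 -> 0 < e1 -> 0 < e2 -> 0 < a ->
  exists x, 0 < x <= a /\ Fa e0 e1 e2 a x = INR n.
Proof.
intros h0 h1 h2 ha.
set (v1 := Rmin a (e0 * exp (- e1))).
assert (hv1 : 0 < v1) by (apply Rmin_pos; [lra| apply Rmult_lt_0_compat; [lra|apply exp_pos]]).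
assert (hv1a : v1 <= a) by apply Rmin_l.
assert (hv1e : v1 <= e0 * exp (- e1)) by apply Rmin_r.
set (x1 := v1 * exp (- INR n)).
assert (hx1 : 0 < x1) by (apply Rmult_lt_0_compat; [lra|apply exp_pos]).
assert (hx1v : x1 <= v1).
{ unfold x1. assert (exp (- INR n) <= 1). { rewrite <- exp_0. 
    destruct (Req_dec (INR n) 0) as [E|E]. rewrite E, Ropp_0. lra.
    left. apply exp_increasing. pose proof (pos_INR n). lra. } nra. }
set (g := clip e0 e1 e2 x1 a).
assert (Hgi : forall c d, ex_RInt g c d) by (intros; apply clip_int; auto; lra).
set (G := fun y => RInt g y a).
assert (HG : continuity G).
{ apply (RInt_cont g (invKstar e0 e1 e2 x1)). intros; apply clip_abs; auto; lra. exact Hgi. }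
assert (HGa : G a = 0) by (unfold G; exact (RInt_point (V:=R_CompleteNormedModule) a g)).
assert (HGx1 : INR n <= G x1).
{ unfold G. rewrite <- (RInt_Chasles g x1 v1 a) by auto.
  change (INR n <= RInt g x1 v1 + RInt g v1 a).
  assert (0 <= RInt g v1 a).
  { apply RInt_ge_0; auto. intros t Ht. unfold g, clip. apply invK_nonneg; auto.
    apply Rlt_le_trans with x1; [lra| apply Rmax_l]. }
  assert (Hln : is_RInt (fun t => / t) x1 v1 (ln v1 - ln x1)).
  { apply (is_RInt_derive ln (fun t => / t)).
    - intros t Ht. rewrite Rmin_left in Ht by lra. rewrite Rmax_right in Ht by lra.
      auto_derive. lra. field. lra.
    - intros t Ht. rewrite Rmin_left in Ht by lra. rewrite Rmax_right in Ht by lra.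
      apply (@ex_derive_continuous R_AbsRing R_NormedModule). auto_derive. lra. }
  assert (RInt (fun t => / t) x1 v1 <= RInt g x1 v1).
  { apply RInt_le; auto. exists (ln v1 - ln x1); exact Hln.
    intros t Ht. unfold g. rewrite clip_eq by lra. apply invK_lower; auto. lra. }
  rewrite (is_RInt_unique _ _ _ _ Hln) in H0.
  assert (Ex : ln x1 = ln v1 - INR n) by (unfold x1; rewrite ln_mult, ln_exp; [ring|lra|apply exp_pos]). rewrite Ex in H0. lra. }
assert (Hmm : Rmin (G x1) (G a) <= INR n <= Rmax (G x1) (G a)).
{ rewrite HGa. pose proof (pos_INR n). rewrite Rmin_right by lra. rewrite Rmax_left by lra. lra. }
destruct (IVT_gen G x1 a (INR n) HG Hmm) as [x [Hx HGx]].
rewrite Rmin_left in Hx by lra. rewrite Rmax_right in Hx by lra.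
exists x. split; [lra|]. unfold Fa. rewrite <- HGx. unfold G.
apply RInt_ext. intros t Ht. rewrite Rmin_left in Ht by lra. rewrite Rmax_right in Ht by lra.
unfold g. rewrite clip_eq by lra. reflexivity.
Qed.
Lemma rpow_nonneg s p : 0 <= rpow s p.
Proof. unfold rpow. destruct (Req_EM_T s 0). lra. left; apply exp_pos. Qed.

Lemma rpow_mono s t p : 0 <= p -> 0 <= s <= t -> rpow s p <= rpow t p.
Proof.
intros hp hst. unfold rpow.
destruct (Req_EM_T s 0). destruct (Req_EM_T t 0). lra. left; apply exp_pos.
destruct (Req_EM_T t 0). lra. apply Rle_Rpower_l; auto. lra.
Qed.

Lemma invK_h e0 e1 e2 t : 0 < e0 -> 0 < e1 -> 0 < e2 -> 0 < t < 1 -> e0 * t <= /2 ->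
  invKstar e0 e1 e2 t <= exp (/e2 * ln (ln (/t))) / ((/2 * Rpower (e1/2) (/e2)) * t).
Proof.
intros h0 h1 h2 ht hte.
assert (hL : 0 < ln (/t)). { rewrite ln_Rinv by lra. assert (ln t < 0) by (rewrite <- ln_1; apply ln_increasing; lra). lra. }
assert (hc : 0 < /2 * Rpower (e1/2) (/e2)) by (apply Rmult_lt_0_compat; [lra|apply exp_pos]).
assert (hb : 0 < /2 * Rpower (e1/2) (/e2) * t * Rpower (ln (/t)) (-/e2)).
{ apply Rmult_lt_0_compat; [|apply exp_pos]. apply Rmult_lt_0_compat; lra. }
destruct (invK_bound e0 e1 e2 t _ hb (kstar_lb e0 e1 e2 t t h0 h1 h2 ht hte (Rle_refl t))) as [_ H].
eapply Rle_trans; [exact H|].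
right. unfold Rpower. replace (- / e2 * ln (ln (/ t))) with (-(/e2 * ln (ln (/t)))) by ring.
rewrite exp_Ropp. unfold Rpower in hc. pose proof (exp_pos (/e2 * ln (ln (/t)))). field. repeat split; lra.
Qed.

Theorem lemma15 (eta0 eta1 eta2 a : R)
  (h0 : 0 < eta0) (h1 : 0 < eta1) (h2 : 0 < eta2) (ha : 0 < a) :
  exists C v0 : R, 0 < C /\ 0 < v0 /\ v0 < Rmin 1 a /\
    (forall v, 0 < v <= v0 ->
       Rbar_le (Finite (C * v * rpow (ln (/ v)) (- / eta2)))
               (Kstar eta0 eta1 eta2 v)) /\
    exists C' : R, 0 < C' /\
      forall n : nat,
        Fa_inv eta0 eta1 eta2 a (INR n) <=
          C' * exp (- rpow (C * ((1 + eta2) / eta2) * INR n) (eta2 / (1 + eta2))).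
Proof.
set (c0 := /2 * Rpower (eta1/2) (/eta2)).
assert (hc0 : 0 < c0) by (apply Rmult_lt_0_compat; [lra|apply exp_pos]).
set (C := c0/2).
set (v0 := Rmin (/2) (Rmin (a/2) (/(2*eta0)))).
assert (hv2 : v0 <= /2) by apply Rmin_l.
assert (hva : v0 <= a/2) by (eapply Rle_trans; [apply Rmin_r| apply Rmin_l]).
assert (hv3 : v0 <= /(2*eta0)) by (eapply Rle_trans; [apply Rmin_r| apply Rmin_r]).
assert (hv0 : 0 < v0).
{ unfold v0. repeat apply Rmin_pos; try lra. apply Rinv_0_lt_compat; lra. }
assert (hve : eta0 * v0 <= /2).
{ apply Rmult_le_compat_l with (r := eta0) in hv3; [|lra].
  replace (eta0 * / (2 * eta0)) with (/2) in hv3 by (field; lra). lra. }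
assert (hL : forall t, 0 < t < 1 -> 0 < ln (/t)).
{ intros t ht. rewrite ln_Rinv by lra. assert (ln t < 0) by (rewrite <- ln_1; apply ln_increasing; lra). lra. }
exists C, v0. split; [unfold C; lra|]. split; [lra|]. split.
{ apply Rmin_glb_lt; lra. }
split.
{ intros v hv. assert (hLv := hL v ltac:(lra)).
  unfold rpow. destruct (Req_EM_T (ln (/v)) 0) as [e|_]; [lra|].
  eapply Rbar_le_trans; [| apply (kstar_lb eta0 eta1 eta2 v v); auto; try lra].
  2:{ assert (eta0 * v <= eta0 * v0) by (apply Rmult_le_compat_l; lra). lra. }
  simpl. fold c0. pose proof (exp_pos (- / eta2 * ln (ln (/ v)))). unfold Rpower.
  unfold C. assert (0 < v * exp (- / eta2 * ln (ln (/ v)))) by (apply Rmult_lt_0_compat; lra).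
  nra. }
set (q := 1 + /eta2).
assert (hq : 0 < q) by (unfold q; pose proof (Rinv_0_lt_compat _ h2); lra).
replace ((1 + eta2) / eta2) with q by (unfold q; field; lra).
replace (eta2 / (1 + eta2)) with (/q) by (unfold q; field; split; lra).
set (L0 := ln (/v0)).
assert (hL0 : 0 < L0) by (apply hL; lra).
set (b0 := c0 * v0 * Rpower L0 (-/eta2)).
assert (hb0 : 0 < b0).
{ unfold b0. apply Rmult_lt_0_compat; [|apply exp_pos]. apply Rmult_lt_0_compat; lra. }
set (M := a * / b0).
assert (hM : 0 < M) by (apply Rmult_lt_0_compat; [lra| apply Rinv_0_lt_compat; lra]).
set (N := 2 * M).
set (R0 := rpow (C * q * N) (/q)).
exists (Rmax 1 a * exp R0). split.
{ apply Rmult_lt_0_compat; [| apply exp_pos]. apply Rlt_le_trans with 1; [lra|apply Rmax_l]. }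
intros n.
assert (Hs := epsilon_spec (inhabits 0) (fun x => 0 < x <= a /\ Fa eta0 eta1 eta2 a x = INR n)
   (Fa_exists eta0 eta1 eta2 a n h0 h1 h2 ha)).
change (epsilon (inhabits 0) (fun x => 0 < x <= a /\ Fa eta0 eta1 eta2 a x = INR n))
  with (Fa_inv eta0 eta1 eta2 a (INR n)) in Hs.
set (x := Fa_inv eta0 eta1 eta2 a (INR n)) in *.
destruct Hs as [[hx0 hxa] hF].
unfold Fa in hF.
assert (Hbig : forall t, v0 <= t -> Rabs (invKstar eta0 eta1 eta2 t) <= / b0).
{ intros t ht. rewrite Rabs_right by (apply Rle_ge, invK_nonneg; auto; lra).
  apply (Rle_trans _ (invKstar eta0 eta1 eta2 v0)). apply invK_anti; auto; lra.
  apply (invK_bound eta0 eta1 eta2 v0 b0 hb0).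
  apply (kstar_lb eta0 eta1 eta2 v0 v0); auto; lra. }
assert (Hclaim : INR n <= N \/ (N < INR n /\ x < v0 /\ C * q * INR n <= Rpower (ln (/x)) q)).
{ destruct (Rle_dec v0 x) as [hxv|hxv].
  - left. rewrite <- hF.
    apply Rle_trans with (Rabs (RInt (invKstar eta0 eta1 eta2) x a)). apply Rle_abs.
    apply Rle_trans with ((a - x) * / b0).
    apply abs_RInt_le_const; auto. apply (invK_int eta0 eta1 eta2 x a); auto; lra.
    intros t ht; apply Hbig; lra.
    unfold N, M. assert (0 < /b0) by (apply Rinv_0_lt_compat; lra). nra.
  - destruct (Rle_dec (INR n) N) as [hn|hn]; [left; exact hn| right].
    split; [apply Rnot_le_lt; exact hn|split; [lra|]].
    assert (Hi1 : ex_RInt (invKstar eta0 eta1 eta2) x v0) by (apply (invK_int eta0 eta1 eta2 x a); auto; lra).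
    assert (Hi2 : ex_RInt (invKstar eta0 eta1 eta2) v0 a) by (apply (invK_int eta0 eta1 eta2 x a); auto; lra).
    rewrite <- (RInt_Chasles _ x v0 a Hi1 Hi2) in hF.
    change (RInt (invKstar eta0 eta1 eta2) x v0 + RInt (invKstar eta0 eta1 eta2) v0 a = INR n) in hF.
    assert (H2 : RInt (invKstar eta0 eta1 eta2) v0 a <= M).
    { apply Rle_trans with (Rabs (RInt (invKstar eta0 eta1 eta2) v0 a)). apply Rle_abs.
      apply Rle_trans with ((a - v0) * / b0).
      apply abs_RInt_le_const; auto. lra. intros t ht; apply Hbig; lra.
      unfold M. assert (0 < /b0) by (apply Rinv_0_lt_compat; lra). nra. }
    assert (Hanti := antider eta2 c0 x v0 h2 hc0 ltac:(lra) ltac:(lra)).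
    assert (H1 : RInt (invKstar eta0 eta1 eta2) x v0 <=
                 RInt (fun v => exp (/eta2 * ln (ln (/v))) / (c0 * v)) x v0).
    { apply RInt_le; auto. lra. eexists; exact Hanti.
      intros t ht. apply invK_h; auto. lra.
      assert (eta0 * t <= eta0 * v0) by (apply Rmult_le_compat_l; lra). lra. }
    rewrite (is_RInt_unique _ _ _ _ Hanti) in H1.
    fold q in H1.
    assert (hEx : 0 < exp (q * ln (ln (/ v0)))) by apply exp_pos.
    assert (hcq : 0 < / (c0 * q)) by (apply Rinv_0_lt_compat, Rmult_lt_0_compat; lra).
    assert (HR : INR n <= M + / (c0 * q) * Rpower (ln (/x)) q).
    { unfold Rpower. nra. }
    assert (HR2 : c0 * q * (INR n - M) <= Rpower (ln (/x)) q).
    { apply Rmult_le_compat_l with (r := c0 * q) in HR; [|nra].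
      replace (c0 * q * (M + / (c0 * q) * Rpower (ln (/ x)) q)) with
        (c0 * q * M + Rpower (ln (/ x)) q) in HR by (field; lra). nra. }
    apply Rnot_le_lt in hn. unfold N in hn. assert (0 < c0 * q) by (apply Rmult_lt_0_compat; lra). assert (0 <= (c0 * q) * (INR n / 2 - M)) by (apply Rmult_le_pos; lra). unfold C. lra. }
assert (hR0 : 0 <= R0) by apply rpow_nonneg.
assert (hC' : 1 <= Rmax 1 a * exp R0).
{ assert (1 <= exp R0) by (rewrite <- exp_0; apply exp_le_3 || (destruct hR0 as [h|h]; [left; apply exp_increasing; auto| rewrite h; lra])).
  assert (1 <= Rmax 1 a) by apply Rmax_l. nra. }
destruct Hclaim as [hn | [hNn [hxv hn]]].
- assert (Hr : rpow (C * q * INR n) (/q) <= R0).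
  { apply rpow_mono. left; apply Rinv_0_lt_compat; lra.
    pose proof (pos_INR n). unfold C. split.
    apply Rmult_le_pos; [|lra]. apply Rmult_le_pos; lra.
    apply Rmult_le_compat_l; [|lra]. apply Rmult_le_pos; lra. }
  assert (1 <= exp R0 * exp (- rpow (C * q * INR n) (/ q))).
  { rewrite <- exp_plus. rewrite <- exp_0. destruct (Req_dec (R0 + - rpow (C * q * INR n) (/ q)) 0) as [e|e].
    rewrite e; lra. left; apply exp_increasing; lra. }
  assert (x <= Rmax 1 a) by (apply Rle_trans with a; [lra| apply Rmax_r]).
  assert (0 <= Rmax 1 a) by (apply Rle_trans with 1; [lra|apply Rmax_l]).
  rewrite Rmult_assoc. nra.
- assert (hLx := hL x ltac:(lra)).
  assert (hCn : 0 < C * q * INR n).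
  { assert (0 < INR n) by (unfold N in hNn; lra). unfold C. apply Rmult_lt_0_compat; [|lra]. apply Rmult_lt_0_compat; lra. }
  assert (Hr : rpow (C * q * INR n) (/q) <= ln (/x)).
  { unfold rpow. destruct (Req_EM_T (C * q * INR n) 0); [lra|].
    apply Rle_trans with (Rpower (Rpower (ln (/x)) q) (/q)).
    apply Rle_Rpower_l. left; apply Rinv_0_lt_compat; lra. split; lra.
    rewrite Rpower_mult. rewrite Rinv_r by lra. rewrite Rpower_1 by lra. lra. }
  assert (Ex : exp (- ln (/x)) = x).
  { rewrite ln_Rinv by lra. rewrite Ropp_involutive. apply exp_ln; lra. }
  assert (x <= exp (- rpow (C * q * INR n) (/ q))).
  { rewrite <- Ex at 1. destruct (Req_dec (rpow (C * q * INR n) (/ q)) (ln (/x))) as [e|e].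
    rewrite e; lra. left; apply exp_increasing; lra. }
  pose proof (exp_pos (- rpow (C * q * INR n) (/ q))). nra.
Qed.
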